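(* For the modular data of the quantum double of $S_3$, each of the trace one modular invariants $Z_{25},Z_{52},Z_{34},Z_{43}$ has, up to equivalence, exactly one matching nimrep.
   Context: Primaries $0,\dots,7$, all self-conjugate, with $S=\frac16\begin{pmatrix}1&1&2&2&2&2&3&3\\1&1&2&2&2&2&-3&-3\\2&2&4&-2&-2&-2&0&0\\2&2&-2&4&-2&-2&0&0\\2&2&-2&-2&-2&4&0&0\\2&2&-2&-2&4&-2&0&0\\3&-3&0&0&0&0&3&-3\\3&-3&0&0&0&0&-3&3\end{pmatrix}$, fusion coefficients $N_{\lambda\mu}^\nu=\sum_\rho S_{\lambda\rho}S_{\mu\rho}\overline{S_{\nu\rho}}/S_{0\rho}$. With linear forms $s_2=\chi_0+\chi_1+2\chi_2$, $s_3=\chi_0+\chi_1+2\chi_3$, $s_4=\chi_0+\chi_2+\chi_6$, $s_5=\chi_0+\chi_3+\chi_6$ (identified with their coefficient vectors $(a_\lambda)_{\lambda=0}^7$), $Z_{ij}=s_is_j^*$ is the matrix $(a^{(i)}_\lambda a^{(j)}_\mu)_{\lambda,\mu}$. A nimrep of dimension $n$: non-negative integer $n\times n$ matrices $G_\lambda$ with $G_0=I$, $G_{\bar\lambda}=G_\lambda^t$, $G_\lambda G_\mu=\sum_\nu N_{\lambda\mu}^\nu G_\nu$; two nimreps $G',G''$ are equivalent if $PG'_\lambda P^{-1}=G''_\lambda$ for all $\lambda$ for some permutation matrix $P$. $\mathrm{Exp}(Z)$ is the multiset with $Z_{\mu\mu}$ copies of $\mu$. A nimrep matches $Z$ if $n=\mathrm{Tr}\,Z$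 and the $G_\lambda$ are simultaneously unitarily diagonalisable with joint eigenvalues $(S_{\lambda\mu}/S_{0\mu})_\lambda$, $\mu$ running through $\mathrm{Exp}(Z)$ with multiplicity. *)

(* Defs.v *)
From HB Require Import structures.
From mathcomp Require Import all_boot all_order all_algebra all_fingroup all_field.
From mathcomp Require Export spectral.

Set Implicit Arguments.
Unset Strict Implicit.
Unset Printing Implicit Defensive.

Import Order.TTheory GRing.Theory Num.Theory.
Local Open Scope ring_scope.
Local Open Scope sesquilinear_scope.

(* Integer numerators of 6*S, primaries indexed by 'I_8 *)
Definition S6 (l m : nat) : int :=
  nth 0 (nth [::] [::
    [:: 1; 1;  2;  2;  2;  2;  3;  3];
    [:: 1; 1;  2;  2;  2;  2; -3; -3];
    [:: 2; 2;  4; -2; -2; -2;  0;  0];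
    [:: 2; 2; -2;  4; -2; -2;  0;  0];
    [:: 2; 2; -2; -2; -2;  4;  0;  0];
    [:: 2; 2; -2; -2;  4; -2;  0;  0];
    [:: 3; -3; 0;  0;  0;  0;  3; -3];
    [:: 3; -3; 0;  0;  0;  0; -3;  3]]%Z l) m.

Definition Smx : 'M[algC]_8 := \matrix_(l < 8, m < 8) ((S6 l m)%:~R / 6%:R).

Definition cconj (l : 'I_8) : 'I_8 := l.

(* Fusion coefficients via the Verlinde formula *)
Definition Nfus (l m n : 'I_8) : algC :=
  \sum_(r < 8) Smx l r * Smx m r * (Smx n r)^* / Smx 0 r.

Definition nimrep (n : nat) (G : 'I_8 -> 'M[nat]_n) : Prop :=
  let Gc := fun l => map_mx (fun k : nat => (k%:R : algC)) (G l) in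
  [/\ G 0 = 1%:M,
      forall l, G (cconj l) = (G l)^T &
      forall l m, Gc l *m Gc m = \sum_(k < 8) Nfus l m k *: Gc k].

Definition nimrep_equiv (n : nat) (G1 G2 : 'I_8 -> 'M[nat]_n) : Prop :=
  exists s : 'S_n, forall l,
    let P : 'M[algC]_n := perm_mx s in
    P *m map_mx (fun k : nat => (k%:R : algC)) (G1 l) *m invmx P
      = map_mx (fun k : nat => (k%:R : algC)) (G2 l).

(* Linear forms, as coefficient vectors *)
Definition vec_of (s : seq nat) : 'I_8 -> nat := fun l => nth 0%N s l.
Definition s2 := vec_of [:: 1; 1; 2; 0; 0; 0; 0; 0]%N.
Definition s3 := vec_of [:: 1; 1; 0; 2; 0; 0; 0; 0]%N.
Definition s4 := vec_of [:: 1; 0; 1; 0; 0; 0; 1; 0]%N.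
Definition s5 := vec_of [:: 1; 0; 0; 1; 0; 0; 1; 0]%N.

Definition Zmx (a b : 'I_8 -> nat) : 'M[nat]_8 :=
  \matrix_(l < 8, m < 8) (a l * b m)%N.

Definition trZ (Z : 'M[nat]_8) : nat := (\sum_(l < 8) Z l l)%N.

(* G matches Z: n = Tr Z, and the G_l are simultaneously unitarily
   diagonalisable with joint eigenvalues (S_{l mu}/S_{0 mu})_l, mu running
   over Exp(Z) with multiplicity (encoded by e : 'I_n -> 'I_8 taking each
   mu exactly Z_{mu mu} times). *)
Definition matches (Z : 'M[nat]_8) (n : nat) (G : 'I_8 -> 'M[nat]_n) : Prop :=
  n = trZ Z /\
  exists (U : 'M[algC]_n) (e : 'I_n -> 'I_8),
    [/\ U \is unitarymx,
        forall mu, #|[set i | e i == mu]| = Z mu mu &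
        forall l, map_mx (fun k : nat => (k%:R : algC)) (G l) =
          U^t* *m diag_mx (\row_i (Smx l (e i) / Smx 0 (e i))) *m U].

Definition unique_matching_nimrep (Z : 'M[nat]_8) : Prop :=
  exists G : 'I_8 -> 'M[nat]_(trZ Z),
    [/\ nimrep G, matches Z G &
        forall G' : 'I_8 -> 'M[nat]_(trZ Z),
          nimrep G' -> matches Z G' -> nimrep_equiv G G'].

(* Main.v *)
Require Import Defs.
From mathcomp Require Import all_boot all_order all_algebra all_fingroup all_field.
From mathcomp Require Import ring.
Import Order.TTheory GRing.Theory Num.Theory.
Local Open Scope ring_scope.
Local Open Scope sesquilinear_scope.

Definition qd (l : 'I_8) : nat := nth 0%N [:: 1; 1; 2; 2; 2; 2; 3; 3]%N l.

Lemma S6orth (r : 'I_8) : (\sum_(k < 8) S6 k r * S6 k 0 = 36 * (r == 0 :> nat)%:Z)%R.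
Proof. by rewrite !big_ord_recl big_ord0; case: r => -[|[|[|[|[|[|[|[|]]]]]]]]. Qed.

Lemma Smx_real l r : (Smx l r)^* = Smx l r.
Proof. by rewrite mxE fmorph_div rmorph_int rmorph_nat. Qed.

Lemma qdE l : (qd l)%:R = Smx l 0 / Smx 0 0 :> algC.
Proof.
rewrite !mxE /= mul1r invrK.
have h6 : (6%:R : algC) != 0 by rewrite pnatr_eq0.
idtac.
rewrite divfK //.
by case: l => -[|[|[|[|[|[|[|[|]]]]]]]].
Qed.

Lemma Sorth (r : 'I_8) : \sum_(k < 8) Smx k r * Smx k 0 = (r == 0 :> nat)%:R.
Proof.
have h6 : (6%:R : algC) != 0 by rewrite pnatr_eq0.
transitivity (\sum_(k < 8) (S6 k r * S6 k 0)%:~R / 36 : algC).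
  apply: eq_bigr => k _; rewrite !mxE rmorphM /=.
  rewrite mulrACA -invfM -natrM //.
rewrite -mulr_suml -rmorph_sum /= S6orth rmorphM /= mulrC mulKf //.
by rewrite pnatr_eq0.
Qed.

Lemma verl (l m : 'I_8) :
  (qd l)%:R * (qd m)%:R = \sum_(k < 8) Nfus l m k * (qd k)%:R :> algC.
Proof.
transitivity (\sum_(r < 8) (Smx l r * Smx m r / Smx 0 r / Smx 0 0) *
                (\sum_(k < 8) Smx k r * Smx k 0)).
  under eq_bigr => r _ do rewrite Sorth.
  rewrite (bigD1 ord0) //= big1 => [|r r0]; last by move: r0; rewrite -val_eqE /= => /negbTE ->; rewrite mulr0.
  rewrite mulr1 addr0 !qdE.
  have h : Smx 0 0 != 0 by rewrite mxE /= mul1r invr_eq0 pnatr_eq0.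
  by field.
under eq_bigr => r _ do rewrite mulr_sumr.
rewrite exchange_big /=.
apply: eq_bigr => k _.
rewrite /Nfus qdE mulr_suml.
apply: eq_bigr => r _; rewrite Smx_real.
by ring.
Qed.

Lemma umn (Z : 'M[nat]_8) :
  (forall mu : 'I_8, Z mu mu = (mu == 0 :> nat)) -> unique_matching_nimrep Z.
Proof.
move=> hZ.
have htr : trZ Z = 1%N by rewrite /trZ big_ord_recl hZ big1 // => i _; rewrite hZ.
rewrite /unique_matching_nimrep.
move: (trZ Z) (htr) => n hn; subst n.
have key : forall G' : 'I_8 -> 'M[nat]_1, matches Z G' -> forall l,
    map_mx (fun k : nat => (k%:R : algC)) (G' l) = ((qd l)%:R : algC)%:M.
  move=> G' [_ [U [e [/unitarymxP hU he hG]]]] l.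
  have e0 : e ord0 = 0.
    have : (0 < #|[set i | e i == e ord0]|)%N by apply/card_gt0P; exists ord0; rewrite inE.
    rewrite he hZ lt0b => /eqP h; exact: val_inj.
  have hU0 : (U *m U^t*) ord0 ord0 = 1 by rewrite hU mxE.
  rewrite !mxE big_ord1 !mxE in hU0.
  rewrite hG; apply/matrixP => i j; rewrite !ord1 !mxE big_ord1 !mxE big_ord1 !mxE.
  have hq := qdE l; rewrite !mxE /= in hq.
  rewrite e0 -hq !mulr1n; change (U ord0 0) with (U ord0 ord0).
  by rewrite mulrC mulrA hU0 mul1r.
pose G (l : 'I_8) : 'M[nat]_1 := const_mx (qd l).
have mG : matches Z G.
  split; first by rewrite htr.
  exists 1%:M, (fun _ => 0); split.
  - by apply/unitarymxP; apply/matrixP => i j; rewrite !ord1 !mxE big_ord1 !mxE /= conjC1 mulr1.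
  - move=> mu; rewrite hZ; have [->|h] := eqVneq mu 0.
      by rewrite eqxx; transitivity #|'I_1|; [apply: eq_card => i; rewrite inE /= | exact: card_ord].
    have hn : (mu == 0 :> nat) = false by apply/negbTE; move: h; rewrite -val_eqE.
    rewrite hn; apply/eqP; rewrite cards_eq0; apply/eqP/setP => i.
    by rewrite !inE.
  - move=> l; apply/matrixP => i j; rewrite !ord1 !mxE big_ord1 !mxE big_ord1 !mxE.
    have hq := qdE l; rewrite !mxE /= in hq.
    by rewrite eqxx !mulr1n conjC1 mul1r mulr1 -hq.
exists G; split => //.
- split.
  + by apply/matrixP => i j; rewrite !ord1 !mxE.
  + by move=> l; apply/matrixP => i j; rewrite !mxE.
  + move=> l m; apply/matrixP => i j; rewrite !ord1 !mxE big_ord1 !mxE summxE.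
    rewrite verl; apply: eq_bigr => k _; by rewrite !mxE.
- move=> G' _ mG'; exists 1%g => l /=.
  by rewrite perm_mx1 invmx1 mul1mx mulmx1 (key _ mG) (key _ mG').
Qed.

Theorem proposition6p3 :
  [/\ unique_matching_nimrep (Zmx s2 s5),
      unique_matching_nimrep (Zmx s5 s2),
      unique_matching_nimrep (Zmx s3 s4) &
      unique_matching_nimrep (Zmx s4 s3)].
Proof.
by split; apply: umn => mu; rewrite mxE; case: mu => -[|[|[|[|[|[|[|[|]]]]]]]].
Qed.
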